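(* A unicyclic graph that has a vertex of degree at least four, or that has a vertex of degree three not contained in its cycle, is not in $\mathcal{G}^{\rm SSP}$.
   Context: All graphs are finite, simple, undirected. A unicyclic graph is a connected graph containing exactly one cycle. For a graph $G$ on $\{1,\ldots,n\}$, $\mathcal{S}(G)$ is the set of real symmetric $n\times n$ matrices $A=(a_{ij})$ with $a_{ij}\neq0$ iff $\{i,j\}\in E(G)$ for $i\neq j$ (diagonal arbitrary). A real symmetric $A$ has the strong spectral property (SSP) if the only real symmetric $X$ with $A\circ X=0$, $I\circ X=0$, $AX-XA=0$ is $X=0$ ($\circ$ = entrywise product). $\mathcal{G}^{\rm SSP}$ is the set of graphs $G$ such that every matrix in $\mathcal{S}(G)$ has the SSP. *)

(* Defs.v *)
From HB Require Import structures.
From mathcomp Require Import all_boot all_order all_algebra.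
From mathcomp Require Import reals.
Set Implicit Arguments. Unset Strict Implicit. Unset Printing Implicit Defensive.
Import Order.TTheory GRing.Theory Num.Theory.
Local Open Scope ring_scope.

Definition simple_graph n (e : rel 'I_n) : Prop :=
  (forall i j, e i j = e j i) /\ (forall i, e i i = false).

Definition connected_graph n (e : rel 'I_n) : Prop :=
  forall u v, connect e u v.

Definition degree n (e : rel 'I_n) (v : 'I_n) : nat := #|[set u | e v u]|.

Definition is_cycle n (e : rel 'I_n) (s : seq 'I_n) : Prop :=
  [/\ (3 <= size s)%N, uniq s & path.cycle e s].

Definition cycle_edges n (s : seq 'I_n) : {set 'I_n * 'I_n} :=
  [set p | (p \in zip s (rot 1 s)) || ((p.2, p.1) \in zip s (rot 1 s))].

Definition unicyclic n (e : rel 'I_n) : Prop :=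
  connected_graph e /\
  exists s, is_cycle e s /\
    forall t, is_cycle e t -> cycle_edges t = cycle_edges s.

Definition in_SG (R : realType) n (e : rel 'I_n) (A : 'M[R]_n) : Prop :=
  A^T = A /\ forall i j, i != j -> (A i j != 0) = e i j.

Definition SSP (R : realType) n (A : 'M[R]_n) : Prop :=
  forall X : 'M[R]_n, X^T = X ->
    (forall i j, A i j * X i j = 0) ->
    (forall i, X i i = 0) ->
    A *m X = X *m A -> X = 0.

Definition in_GSSP (R : realType) n (e : rel 'I_n) : Prop :=
  forall A : 'M[R]_n, in_SG e A -> SSP A.

(* Main.v *)
Require Import Defs.
From mathcomp Require Import all_boot all_order all_algebra reals.
From mathcomp Require Import zify.
Set Implicit Arguments. Unset Strict Implicit. Unset Printing Implicit Defensive.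
Import GRing.Theory Num.Theory.

Section Graph.
Variables (n : nat) (e : rel 'I_n).
Hypothesis esym : forall i j, e i j = e j i.
Hypothesis eirr : forall i, e i i = false.

Definition avoid (c : 'I_n) := [rel i j | e i j && (i != c) && (j != c)].

Lemma avoid_sym c : symmetric (avoid c).
Proof. by move=> i j /=; rewrite esym andbAC. Qed.

Lemma avoid_csym c : connect_sym (avoid c).
Proof. exact: sym_connect_sym (avoid_sym c). Qed.

Lemma connect_avoid_c c u : connect (avoid c) u c -> u = c.
Proof.
case/connectP => p; elim: p u => [|z p IH] u /=; first by move=> _ ->.
case/andP => /andP[/andP[_ _] zc] Hp Hl.
by move: zc; rewrite (IH z Hp Hl) eqxx.
Qed.

Lemma avoid_ne c u j : connect (avoid c) u j -> u != c -> j != c.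
Proof.
move=> H uc; apply/eqP => jc; move: H; rewrite jc => /connect_avoid_c uc'.
by rewrite uc' eqxx in uc.
Qed.

Lemma connect_inv c u i j : e i j -> i != c -> j != c ->
  connect (avoid c) u i = connect (avoid c) u j.
Proof.
move=> eij ic jc; have Hij : avoid c i j by rewrite /= eij ic jc.
apply/idP/idP => H.
  by apply: (connect_trans H); apply: connect1.
apply: connect_trans H _; rewrite avoid_csym; exact: connect1.
Qed.

Definition rmedge x y :=
  [rel i j | e i j && ~~ (((i == x) && (j == y)) || ((i == y) && (j == x)))].

Lemma connect_restr (e1 e2 : rel 'I_n) (P : pred 'I_n) x y :
  (forall a b, P a -> e1 a b -> e2 a b) -> (forall a b, P a -> e1 a b -> P b) ->
  P x -> connect e1 x y -> connect e2 x y.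
Proof.
move=> H12 HP Px /connectP [p Hp ->]; apply/connectP; exists p => //.
elim: p x Px Hp => [|z p IH] x Px //= /andP[exz Hp].
by rewrite (H12 _ _ Px exz) /= (IH z (HP _ _ Px exz) Hp).
Qed.

Lemma path_avoid r x l : path e x l -> x != r -> r \notin l -> path (avoid r) x l.
Proof.
elim: l x => [|z l IH] x //= /andP[exz Hp] xr; rewrite inE negb_or => /andP[rz rl].
by rewrite exz xr eq_sym rz /= IH // eq_sym.
Qed.

Section Cycle.
Variable s : seq 'I_n.
Hypothesis Hs : is_cycle e s.
Hypothesis Huni : forall t, is_cycle e t -> cycle_edges t = cycle_edges s.

Lemma bridge x y : e x y -> connect (rmedge x y) x y -> (x, y) \in cycle_edges s.
Proof.
move=> exy /connectP [p Hp Hl].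
case: (shortenP Hp) Hl => p' Hp' Hu _ Hl; subst y; clear Hp.
have Ht : is_cycle e (x :: p').
  split => //.
    case: p' Hp' exy {Hu} => [|z [|z' l]] /=.
    - by move=> _; rewrite eirr.
    - by rewrite !eqxx andbF.
    - by [].
  rewrite /cycle rcons_path (sub_path _ Hp') /=; first by rewrite esym.
  by move=> i j /= /andP[].
rewrite -(Huni Ht) inE /=; apply/orP; right.
rewrite rot1_cons (lastI x p') zip_rcons ?size_belast // mem_rcons mem_head.
by [].
Qed.

Lemma ce_mem i j : (i, j) \in cycle_edges s -> (i \in s) && (j \in s).
Proof.
have Hsz : size s = size (rot 1 s) by rewrite size_rot.
rewrite inE /= => /orP [] H.
  have H1 : i \in unzip1 (zip s (rot 1 s)) := map_f fst H.
  have H2 : j \in unzip2 (zip s (rot 1 s)) := map_f snd H.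
  rewrite unzip1_zip ?Hsz // in H1; rewrite unzip2_zip ?Hsz // mem_rot in H2.
  by rewrite H1 H2.
have H1 : j \in unzip1 (zip s (rot 1 s)) := map_f fst H.
have H2 : i \in unzip2 (zip s (rot 1 s)) := map_f snd H.
rewrite unzip1_zip ?Hsz // in H1; rewrite unzip2_zip ?Hsz // mem_rot in H2.
by rewrite H1 H2.
Qed.

Lemma zip_nth1 (s1 t1 : seq 'I_n) x0 v a : size s1 = size t1 -> uniq s1 ->
  (v, a) \in zip s1 t1 -> a = nth x0 t1 (index v s1).
Proof.
move=> Hsz Hu /(nthP (x0, x0)) [i]; rewrite size_zip Hsz minnn => Hi.
rewrite nth_zip // => -[<- <-]; rewrite index_uniq // Hsz //.
Qed.

Lemma zip_nth2 (s1 t1 : seq 'I_n) x0 v a : size s1 = size t1 -> uniq t1 ->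
  (a, v) \in zip s1 t1 -> a = nth x0 s1 (index v t1).
Proof.
move=> Hsz Hu /(nthP (x0, x0)) [i]; rewrite size_zip Hsz minnn => Hi.
rewrite nth_zip // => -[<- <-]; rewrite index_uniq //.
Qed.

Lemma ce_two v a : (v, a) \in cycle_edges s ->
  (a == nth v (rot 1 s) (index v s)) || (a == nth v s (index v (rot 1 s))).
Proof.
case: Hs => _ Hu _.
have Hsz : size s = size (rot 1 s) by rewrite size_rot.
rewrite inE /= => /orP [] H.
  by rewrite (zip_nth1 v Hsz Hu H) eqxx.
by rewrite (zip_nth2 v Hsz _ H) ?rot_uniq // eqxx orbT.
Qed.

Lemma nbr_cycle v a b : e v a -> e v b -> a != b ->
  connect (avoid v) a b -> (v, a) \in cycle_edges s.
Proof.
move=> eva evb ab Hab; apply: bridge => //.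
have va : v != a by apply/eqP => va; rewrite va eirr in eva.
apply: (@connect_trans _ _ b).
  have ba : (b == a) = false by rewrite eq_sym (negbTE ab).
  by apply: connect1; rewrite /= evb ba (negbTE va) andbF.
apply: (connect_sub (e:=avoid v)); last by rewrite avoid_csym.
move=> i j /= /andP[/andP[eij iv] jv]; apply: connect1.
by rewrite /= eij (negbTE iv) (negbTE jv) !andbF.
Qed.

Lemma triple v a b c : e v a -> e v b -> e v c -> a != b -> a != c -> b != c ->
  connect (avoid v) a b -> connect (avoid v) a c -> False.
Proof.
move=> eva evb evc ab ac bc Hab Hac.
have Hba : connect (avoid v) b a by rewrite avoid_csym.
have Hca : connect (avoid v) c a by rewrite avoid_csym.
have := ce_two (nbr_cycle eva evb ab Hab).
have ba : b != a by rewrite eq_sym.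
have ca : c != a by rewrite eq_sym.
have := ce_two (nbr_cycle evb eva ba Hba).
have := ce_two (nbr_cycle evc eva ca Hca).
set f := nth _ _ _; set g := nth _ _ _.
move=> /orP[]/eqP Hc /orP[]/eqP Hb /orP[]/eqP Ha;
  by move: ab ac bc; rewrite Ha Hb Hc ?eqxx.
Qed.

End Cycle.
End Graph.


Section LA.
Local Open Scope ring_scope.
Variables (R : realType) (n : nat) (e : rel 'I_n).
Hypothesis esy : forall i j, e i j = e j i.
Hypothesis eirr : forall i, e i i = false.
Variable w : 'I_n -> 'I_n -> R.
Hypothesis wsym : forall i j, w i j = w j i.
Hypothesis wnz : forall i j, e i j -> w i j != 0.

Definition aw i j := if e i j then w i j else 0.

Lemma aw_sym i j : aw i j = aw j i.
Proof. by rewrite /aw esy wsym. Qed.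

Section Vec.
Variables x y : 'I_n -> R.
Definition dg i := if x i != 0 then - (\sum_j aw i j * x j) / x i
  else if y i != 0 then - (\sum_j aw i j * y j) / y i else 0.
Definition Amx : 'M[R]_n := \matrix_(i, j) if i == j then dg i else aw i j.

Lemma Amx_row (z : 'I_n -> R) i :
  \sum_j Amx i j * z j = dg i * z i + \sum_j aw i j * z j.
Proof.
rewrite (bigD1 i) //= [X in _ = _ + X](bigD1 i) //= mxE eqxx /aw eirr mul0r add0r.
congr (_ + _); apply: eq_bigr => j /negbTE nij; rewrite mxE eq_sym nij //.
Qed.

Hypothesis Hxy : forall i, x i * y i = 0.
Hypothesis Hcross : forall i j, e i j -> x i * y j = 0.
Hypothesis Hx0 : exists i, x i != 0.
Hypothesis Hy0 : exists i, y i != 0.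
Hypothesis Hrowx : forall i, x i = 0 -> \sum_j aw i j * x j = 0.
Hypothesis Hrowy : forall i, y i = 0 -> \sum_j aw i j * y j = 0.

Lemma Ax0 i : \sum_j Amx i j * x j = 0.
Proof.
rewrite Amx_row /dg; case: ifP => [xi|/negbFE/eqP xi].
  by rewrite -mulrA mulVf // mulr1 addNr.
by rewrite xi mulr0 add0r Hrowx.
Qed.

Lemma Ay0 i : \sum_j Amx i j * y j = 0.
Proof.
rewrite Amx_row /dg; case: (eqVneq (y i) 0) => [yi|yi].
  by rewrite yi mulr0 add0r Hrowy.
have -> : (x i != 0) = false.
  by apply/negbTE; rewrite negbK; have := Hxy i; move/eqP; rewrite mulf_eq0 (negbTE yi) orbF.
by rewrite -mulrA mulVf // mulr1 addNr.
Qed.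

Lemma Amx_sym : Amx^T = Amx.
Proof.
apply/matrixP => i j; rewrite !mxE eq_sym; case: eqP => [->//|_].
by rewrite aw_sym.
Qed.

Lemma notG : ~ in_GSSP R e.
Proof.
move=> H.
have HS : in_SG e Amx.
  split; first exact: Amx_sym.
  move=> i j /negbTE ij; rewrite mxE ij /aw; case: ifP => eij.
    by rewrite (wnz eij).
  by rewrite eqxx.
pose X : 'M[R]_n := \matrix_(i, j) (x i * y j + y i * x j).
have HX : X = 0.
  apply: (H _ HS).
  - by apply/matrixP => i j; rewrite !mxE addrC; congr (_ + _); apply: mulrC.
  - move=> i j; rewrite !mxE; case: (eqVneq i j) => [->|ij].
      by rewrite (Hxy j) [y j * x j]mulrC (Hxy j) addr0 mulr0.
    rewrite /aw; case: ifP => eij; last by rewrite mul0r.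
    have eji : e j i by rewrite esy.
    by rewrite (Hcross eij) [y i * x j]mulrC (Hcross eji) addr0 mulr0.
  - by move=> i; rewrite mxE (Hxy i) [y i * x i]mulrC (Hxy i) addr0.
  - have XE : forall i j, X i j = x i * y j + y i * x j by move=> i j; rewrite mxE.
    have -> : Amx *m X = 0.
      apply/matrixP => i j; rewrite mxE [RHS]mxE.
      under eq_bigr => k _ do rewrite XE mulrDr !mulrA.
      rewrite big_split /= -!mulr_suml.
      by rewrite (Ax0 i) (Ay0 i) !mul0r addr0.
    apply/esym/matrixP => i j; rewrite mxE [RHS]mxE.
    have AS : forall k, Amx k j = Amx j k.
      by move=> k; rewrite -{1}Amx_sym mxE.
    under eq_bigr => k _ do rewrite XE mulrDl AS -!mulrA (mulrC (y k)) (mulrC (x k)).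
    rewrite big_split /= -!mulr_sumr.
    by rewrite (Ax0 j) (Ay0 j) !mulr0 addr0.
case: Hx0 => i xi; case: Hy0 => j yj.
have yi : y i = 0.
  by have := Hxy i; move/eqP; rewrite mulf_eq0 (negbTE xi) /= => /eqP.
have : X i j = 0 by rewrite HX mxE.
by rewrite mxE yi mul0r addr0 => /eqP; rewrite mulf_eq0 (negbTE xi) (negbTE yj).
Qed.

End Vec.
End LA.


Section Vecs.
Local Open Scope ring_scope.
Variables (R : realType) (n : nat) (e : rel 'I_n).
Hypothesis esy : forall i j, e i j = e j i.
Hypothesis eirr : forall i, e i i = false.
Variable w : 'I_n -> 'I_n -> R.
Hypothesis wsym : forall i j, w i j = w j i.
Hypothesis wnz : forall i j, e i j -> w i j != 0.

Notation aw := (aw e w).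

Lemma row_inv (x : 'I_n -> R) c :
  (forall i j, e i j -> i != c -> j != c -> x i = x j) -> x c = 0 ->
  \sum_j aw c j * x j = 0 -> forall i, x i = 0 -> \sum_j aw i j * x j = 0.
Proof.
move=> Hinv Hc Hrow i Hi; case: (eqVneq i c) => [->//|ic].
apply: big1 => j _; rewrite /aw; case: ifP => eij; last by rewrite mul0r.
case: (eqVneq j c) => [->|jc]; first by rewrite Hc mulr0.
by rewrite -(Hinv i j) // Hi mulr0.
Qed.

Definition ind (c u j : 'I_n) : R := if connect (avoid e c) u j then 1 else 0.

Lemma ind_inv c u i j : e i j -> i != c -> j != c -> ind c u i = ind c u j.
Proof. by move=> eij ic jc; rewrite /ind (connect_inv esy u eij ic jc). Qed.

Lemma ind_c c u : u != c -> ind c u c = 0.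
Proof.
move=> uc; rewrite /ind; case: ifP => // /connect_avoid_c H.
by rewrite H eqxx in uc.
Qed.

Definition sig c u := \sum_j aw c j * ind c u j.
Definition pal c a b : R :=
  if sig c a == 0 then 1 else if sig c b == 0 then 0 else sig c b.
Definition pbe c a b : R :=
  if sig c a == 0 then 0 else if sig c b == 0 then 1 else - sig c a.
Definition pvec c a b j := pal c a b * ind c a j + pbe c a b * ind c b j.

Lemma pvec_inv c a b i j : e i j -> i != c -> j != c -> pvec c a b i = pvec c a b j.
Proof. by move=> eij ic jc; rewrite /pvec !(ind_inv _ eij ic jc). Qed.

Lemma pvec_c c a b : a != c -> b != c -> pvec c a b c = 0.
Proof. by move=> ac bc; rewrite /pvec !ind_c // !mulr0 addr0. Qed.

Lemma pvec_row c a b : \sum_j aw c j * pvec c a b j = 0.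
Proof.
rewrite /pvec.
under eq_bigr => j _ do rewrite mulrDr mulrCA [aw c j * (pbe c a b * _)]mulrCA.
rewrite big_split /= -!mulr_sumr -/(sig c a) -/(sig c b) /pal /pbe.
case: eqP => [->|_]; first by rewrite mulr0 mul0r addr0.
case: eqP => [->|_]; first by rewrite mulr0 mul0r addr0.
by rewrite mulrC mulNr addrN.
Qed.

Lemma pvec_nz c a b : (~~ connect (avoid e c) a b \/ sig c a = 0) ->
  exists j, pvec c a b j != 0.
Proof.
move=> H; rewrite /pvec /pal /pbe.
case: eqP => [_|sa].
  by exists a; rewrite /ind connect0 mulr1 mul0r addr0 oner_neq0.
case: eqP => [_|sb].
  by exists b; rewrite /ind connect0 mulr1 mul0r add0r oner_neq0.
exists a; case: H => [H|//].
rewrite /ind connect0 (avoid_csym esy) (negbTE H) mulr0 addr0 mulr1.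
by apply/eqP.
Qed.

Lemma pvec_supp c a b j : pvec c a b j != 0 ->
  connect (avoid e c) a j || connect (avoid e c) b j.
Proof.
rewrite /pvec /ind; case: ifP => //; case: ifP => //.
by rewrite !mulr0 addr0 eqxx.
Qed.

Lemma same_center (x y : 'I_n -> R) c :
  (forall i j, e i j -> i != c -> j != c -> x i = x j) ->
  (forall i j, e i j -> i != c -> j != c -> y i = y j) ->
  x c = 0 -> y c = 0 ->
  \sum_j aw c j * x j = 0 -> \sum_j aw c j * y j = 0 ->
  (forall i, x i * y i = 0) -> (exists i, x i != 0) -> (exists i, y i != 0) ->
  ~ in_GSSP R e.
Proof.
move=> Hix Hiy Hxc Hyc Hrx Hry Hxy Hx0 Hy0.
apply: (notG esy eirr wsym wnz Hxy) => //.
- move=> i j eij; case: (eqVneq (x i) 0) => [->|xi]; first by rewrite mul0r.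
  case: (eqVneq (y j) 0) => [->|yj]; first by rewrite mulr0.
  have ic : i != c by apply: contraNneq xi => ->; rewrite Hxc.
  have jc : j != c by apply: contraNneq yj => ->; rewrite Hyc.
  have := Hxy j; rewrite -(Hix i j eij ic jc) => /eqP.
  by rewrite mulf_eq0 (negbTE xi) (negbTE yj).
- exact: row_inv Hix Hxc Hrx.
- exact: row_inv Hiy Hyc Hry.
Qed.

End Vecs.


Lemma card_cover n (A M : {set 'I_n}) (l : seq 'I_n) :
  (forall u, u \in A -> u \in M \/ u \in l) -> (#|A| <= #|M| + size l)%N.
Proof.
move=> H.
have sub : A \subset M :|: [set x in l].
  by apply/subsetP => u /H [] Hu; rewrite !inE Hu ?orbT.
apply: leq_trans (subset_leq_card sub) _.
apply: leq_trans (leq_card_setU _ _).1 _.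
by rewrite leq_add2l cardsE card_size.
Qed.

Section Case1.
Local Open Scope ring_scope.
Variables (R : realType) (n : nat) (e : rel 'I_n).
Hypothesis esy : forall i j, e i j = e j i.
Hypothesis eirr : forall i, e i i = false.
Variable s : seq 'I_n.
Hypothesis Hs : is_cycle e s.
Hypothesis Huni : forall t, is_cycle e t -> cycle_edges t = cycle_edges s.
Variable v : 'I_n.
Notation conn := (connect (avoid e v)).

Lemma nbr_ne u : e v u -> u != v.
Proof. by move=> evu; apply/eqP => uv; rewrite uv eirr in evu. Qed.

Lemma conn_sym a b : conn a b = conn b a.
Proof. by rewrite (avoid_csym esy). Qed.

Lemma conn_tr a b c : conn a b -> conn b c -> conn a c.
Proof. by move=> H1 H2; apply: connect_trans H1 H2. Qed.

Lemma sig_pair (w : 'I_n -> 'I_n -> R) u u' : e v u -> e v u' -> u != u' -> conn u u' ->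
  w v u = 1 -> w v u' = -1 -> sig e w v u = 0.
Proof.
move=> evu evu' uu' Hc wu wu'.
rewrite /sig (bigD1 u) //= (bigD1 u') //=; last by rewrite eq_sym.
rewrite big1; last first.
  move=> j /andP[ju ju']; rewrite /aw /ind; case: ifP => evj; last by rewrite mul0r.
  case: ifP => Hj; last by rewrite mulr0.
  exfalso; apply: (triple esy eirr Hs Huni evu evu' evj uu' _ _ Hc Hj).
    by rewrite eq_sym.
  by rewrite eq_sym.
by rewrite /aw /ind evu evu' connect0 Hc wu wu' !mulr1 addr0 addrN.
Qed.

Lemma case1_final a b c d : e v a -> e v b -> e v c -> e v d -> a != b -> c != d ->
  ~~ conn a c -> ~~ conn a d -> ~~ conn b c -> ~~ conn b d -> ~ in_GSSP R e.
Proof.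
move=> eva evb evc evd ab cd ac ad bc bd.
pose w := fun i j : 'I_n => if ((i == v) && ((j == b) || (j == d))) ||
   ((j == v) && ((i == b) || (i == d))) then -1 else 1 : R.
have wsym : forall i j, w i j = w j i by move=> i j; rewrite /w orbC.
have wnz : forall i j, e i j -> w i j != 0.
  by move=> i j _; rewrite /w; case: ifP => _; rewrite ?oppr_eq0 oner_eq0.
have av := nbr_ne eva; have bv := nbr_ne evb.
have cv := nbr_ne evc; have dv := nbr_ne evd.
have ad' : (a == d) = false by apply/negbTE; apply: contraNneq ad => ->; exact: connect0.
have cb' : (c == b) = false.
  by apply/negbTE; apply: contraNneq bc => ->; exact: connect0.
apply: (same_center esy eirr wsym wnz (x := pvec e w v a b) (y := pvec e w v c d) (c := v)).
- by move=> i j; apply: pvec_inv.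
- by move=> i j; apply: pvec_inv.
- exact: pvec_c.
- exact: pvec_c.
- exact: pvec_row.
- exact: pvec_row.
- move=> j; apply/eqP; rewrite mulf_eq0; apply/norP => -[H1 H2].
  move: (pvec_supp H1) (pvec_supp H2) => /orP[] H3 /orP[] H4.
  + by move: ac; rewrite (conn_tr H3 _) // conn_sym.
  + by move: ad; rewrite (conn_tr H3 _) // conn_sym.
  + by move: bc; rewrite (conn_tr H3 _) // conn_sym.
  + by move: bd; rewrite (conn_tr H3 _) // conn_sym.
- apply: pvec_nz => //; case: (boolP (conn a b)) => Hab; [right|by left].
  apply: (sig_pair eva evb ab Hab).
    by rewrite /w eqxx (negbTE ab) ad' (negbTE av).
  by rewrite /w !eqxx.
- apply: pvec_nz => //; case: (boolP (conn c d)) => Hcd; [right|by left].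
  apply: (sig_pair evc evd cd Hcd).
    by rewrite /w eqxx cb' (negbTE cd) (negbTE cv).
  by rewrite /w !eqxx orbT.
Qed.


Lemma case1 : (4 <= #|[set u | e v u]|)%N -> ~ in_GSSP R e.
Proof.
set N := [set u | e v u] => H4.
have [a aN] : exists a, a \in N by apply/card_gt0P; move: H4; clear; lia.
have eva : e v a by rewrite inE in aN.
case: (pickP [pred b | (b \in N) && (b != a) && conn a b]) =>
  [b /andP[/andP[bN ba] Hab] | nop].
  have evb : e v b by rewrite inE in bN.
  pose M := [set u in N | ~~ conn a u].
  have HM : (#|N| <= #|M| + size [:: a; b])%N.
    apply: card_cover => u uN; case: (boolP (conn a u)) => Hau.
      right; rewrite !inE; apply/negPn/negP; rewrite negb_or => /andP[ua ub].
      have evu : e v u by rewrite inE in uN.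
      by apply: (triple esy eirr Hs Huni eva evb evu _ _ _ Hab Hau);
        rewrite // eq_sym.
    by left; rewrite inE uN Hau.
  have [c cM] : exists c, c \in M by apply/card_gt0P; move: HM H4 => /=; clear; lia.
  have [d dM] : exists d, d \in M :\ c.
    apply/card_gt0P; move: HM H4; rewrite (cardsD1 c M) cM /=; clear; lia.
  move: cM dM; rewrite !inE => /andP[cN ac] /andP[dc /andP[dN ad]].
  apply: (@case1_final a b c d) => //.
  - by rewrite eq_sym.
  - by rewrite eq_sym.
  - by apply: contra ac => Hbc; apply: conn_tr Hab Hbc.
  - by apply: contra ad => Hbd; apply: conn_tr Hab Hbd.
have noP : forall u, u \in N -> u != a -> ~~ conn a u.
  by move=> u uN ua; have := nop u; rewrite /= uN ua /= => ->.
have [c cN] : exists c, c \in N :\ a.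
  by apply/card_gt0P; move: H4; rewrite (cardsD1 a N) aN /=; clear; lia.
move: cN; rewrite 2!inE => /andP[ca cN].
have evc : e v c by rewrite inE in cN.
case: (pickP [pred d | (d \in N) && (d != c) && conn c d]) =>
  [d /andP[/andP[dN dc] Hcd] | nopc].
  have evd : e v d by rewrite inE in dN.
  pose M := [set u in N | (u != a) && ~~ conn c u].
  have HM : (#|N| <= #|M| + size [:: a; c; d])%N.
    apply: card_cover => u uN; case: (eqVneq u a) => [->|ua].
      by right; rewrite inE eqxx.
    case: (boolP (conn c u)) => Hcu.
      right; rewrite !inE; apply/negPn/negP; rewrite !negb_or => /and3P[_ uc ud].
      have evu : e v u by rewrite inE in uN.
      by apply: (triple esy eirr Hs Huni evc evd evu _ _ _ Hcd Hcu);
        rewrite // eq_sym.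
    by left; rewrite inE uN ua Hcu.
  have [b bM] : exists b, b \in M by apply/card_gt0P; move: HM H4 => /=; clear; lia.
  move: bM; rewrite !inE => /andP[bN /andP[ba cb]].
  have da : d != a.
    by apply/eqP => da; move: (noP c cN ca); rewrite conn_sym -da Hcd.
  apply: (@case1_final a b c d) => //.
  - by rewrite eq_sym.
  - by rewrite eq_sym.
  - exact: noP.
  - exact: noP.
  - by rewrite conn_sym.
  - by apply: contra cb => Hbd; apply: conn_tr Hcd _; rewrite conn_sym.
have noPc : forall u, u \in N -> u != c -> ~~ conn c u.
  by move=> u uN uc; have := nopc u; rewrite /= uN uc /= => ->.
have H2 : (1 < #|N :\ a :\ c|)%N.
  move: H4; rewrite (cardsD1 a N) aN (cardsD1 c (N :\ a)) !inE ca evc /=; clear; lia.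
have [b bN] : exists b, b \in N :\ a :\ c by apply/card_gt0P; move: H2; clear; lia.
have [d dN] : exists d, d \in N :\ a :\ c :\ b.
  by apply/card_gt0P; move: H2; rewrite (cardsD1 b (N :\ a :\ c)) bN /=; clear; lia.
move: bN dN; rewrite !inE => /and3P[bc ba bN] /and4P[db dc da dN].
have evb : e v b := bN.
have evd : e v d := dN.
apply: (@case1_final a c b d) => //.
- by rewrite eq_sym.
- by rewrite eq_sym.
- by apply: noP; rewrite ?inE // eq_sym.
- by apply: noP; rewrite ?inE // eq_sym.
- by apply: noPc; rewrite ?inE // eq_sym.
- by apply: noPc; rewrite ?inE // eq_sym.
Qed.

End Case1.


Section Case2.
Local Open Scope ring_scope.
Variables (R : realType) (n : nat) (e : rel 'I_n).
Hypothesis esy : forall i j, e i j = e j i.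
Hypothesis eirr : forall i, e i i = false.
Variable s : seq 'I_n.
Hypothesis Hs : is_cycle e s.
Hypothesis Huni : forall t, is_cycle e t -> cycle_edges t = cycle_edges s.
Variable v : 'I_n.
Hypothesis vs : v \notin s.
Notation conn := (connect (avoid e v)).

Lemma nonconn a b : e v a -> e v b -> a != b -> ~~ conn a b.
Proof.
move=> eva evb ab; apply/negP => H.
have := ce_mem (nbr_cycle esy eirr Huni eva evb ab H).
by rewrite (negbTE vs).
Qed.

Lemma case2_final (r p q a b : 'I_n) :
  r \in s -> p \in s -> e r p -> e r q -> p != q -> p != r ->
  connect (avoid e r) p q ->
  (forall u, (u == v) || e v u -> ~~ connect (avoid e r) p u) ->
  e v a -> e v b -> a != b -> ~~ conn a r -> ~~ conn b r -> ~ in_GSSP R e.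
Proof.
move=> rs ps erp erq pq pr Hpq vD eva evb ab ar br.
pose S := [set j | e r j && connect (avoid e r) p j].
have pS : p \in S by rewrite inE erp connect0.
have qS : q \in S by rewrite inE erq Hpq.
have Hk : (2 <= #|S|)%N.
  have sub : [set p; q] \subset S by apply/subsetP => j /set2P[]->.
  by have := subset_leq_card sub; rewrite cards2 pq.
pose w := fun i j : 'I_n => if ((i == r) && (j == p)) || ((i == p) && (j == r))
  then 1 - #|S|%:R else 1 : R.
have wsym : forall i j, w i j = w j i.
  by move=> i j; rewrite /w orbC; congr (if _ then _ else _); congr (_ || _); apply: andbC.
have wnz : forall i j, e i j -> w i j != 0.
  move=> i j _; rewrite /w; case: ifP => _; last exact: oner_neq0.
  rewrite subr_eq0 eq_sym pnatr_eq1; apply/eqP => H; rewrite H in Hk; by [].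
have rv : r != v by apply: contraNneq vs => <-.
have pv : p != v by apply: contraNneq vs => <-.
have av := nbr_ne eirr eva; have bv := nbr_ne eirr evb.
have Dv : forall x, connect (avoid e r) p x -> x != v.
  move=> x Hx; apply/eqP => xv; subst x.
  by move: (vD v); rewrite eqxx Hx => /(_ isT).
have restr : forall j, connect (avoid e r) p j -> conn p j.
  move=> j; apply: (connect_restr (P := connect (avoid e r) p)) => //.
    move=> x z Hx Exz; have Hz : connect (avoid e r) p z.
      by apply: (connect_trans Hx); apply: connect1.
    move: Exz => /= /andP[/andP[exz _] _].
    by rewrite exz (Dv x Hx) (Dv z Hz).
  move=> x z Hx Exz; by apply: (connect_trans Hx); apply: connect1.
have epr : avoid e v p r by rewrite /= esy erp pv rv.
have Hxy : forall j, ind R e r p j * pvec e w v a b j = 0.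
  move=> j; apply/eqP; rewrite mulf_eq0; apply/norP => -[H1 H2].
  move: H1; rewrite /ind; case: ifP => [Hj _|]; last by rewrite eqxx.
  have Hpj := restr j Hj.
  have Hjr : conn j r.
    have Hpr : conn p r by apply: connect1.
    rewrite (avoid_csym esy) in Hpj; exact: connect_trans Hpj Hpr.
  move: (pvec_supp H2) => /orP[] H3.
    by move: ar; rewrite (connect_trans H3 Hjr).
  by move: br; rewrite (connect_trans H3 Hjr).
apply: (notG esy eirr wsym wnz Hxy).
- move=> i j eij; case: (eqVneq (pvec e w v a b j) 0) => [->|yj]; first by rewrite mulr0.
  rewrite /ind; case: ifP => [Hi|]; last by rewrite mul0r.
  have ir : i != r by apply: (avoid_ne Hi pr).
  have jr : j != r.
    apply/eqP => jr; subst j; move: (pvec_supp yj) => /orP[] H3.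
      by rewrite H3 in ar.
    by rewrite H3 in br.
  have Hj : connect (avoid e r) p j.
    by apply: (connect_trans Hi); apply: connect1; rewrite /= eij ir jr.
  have := Hxy j; rewrite /ind Hj mul1r => H; by rewrite H eqxx in yj.
- by exists p; rewrite /ind connect0 oner_neq0.
- apply: pvec_nz => //; left; exact: nonconn.
- apply: (row_inv (c := r)).
  + by move=> i j eij ir jr; apply: ind_inv.
  + by apply: ind_c.
  + have E : forall j, aw e w r j * ind R e r p j = if j \in S then w r j else 0.
      move=> j; rewrite /aw /ind inE; case: (e r j); case: (connect _ p j);
        by rewrite ?mulr1 ?mulr0 ?mul0r.
    under eq_bigr => j _ do rewrite E.
    rewrite -big_mkcond (bigD1 p) //=.
    have E2 : \sum_(j in S | j != p) w r j = \sum_(j in S | j != p) (1 : R).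
      apply: eq_bigr => j /andP[_ jp]; rewrite /w (negbTE jp) eq_sym (negbTE pr).
      by rewrite andbF.
    rewrite E2 /w eqxx /=.
    have : \sum_(j in S) (1 : R) = #|S|%:R by rewrite sumr_const.
    rewrite (bigD1 p) //= => H.
    by rewrite eqxx /= -H opprD addrA addrN add0r addNr.
- apply: (row_inv (c := v)).
  + by move=> i j eij iv jv; apply: pvec_inv.
  + exact: pvec_c.
  + exact: pvec_row.
Qed.


Definition ens := [rel i j | e i j && (i \notin s) && (j \notin s)].

Lemma fh x l : path e x l -> x \notin s -> last x l \in s ->
  exists y r, [/\ connect ens x y, y \notin s, r \in s & e y r].
Proof.
elim: l x => [|z l IH] x /=; first by move=> _ /negbTE ->.
move=> /andP[exz Hp] xs Hl.
case: (boolP (z \in s)) => zs.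
  by exists x, z; split => //; apply: connect0.
have [y [r [H1 H2 H3 H4]]] := IH z Hp zs Hl.
exists y, r; split => //.
by apply: (connect_trans _ H1); apply: connect1; rewrite /= exz xs zs.
Qed.

Lemma case2 : connected_graph e -> (3 <= #|[set u | e v u]|)%N -> ~ in_GSSP R e.
Proof.
move=> Hconn H3.
case: (Hs) => Hsz Hu Hc.
have [s0 s0s] : exists s0, s0 \in s.
  by exists (nth v s 0); apply: mem_nth; apply: leq_trans Hsz.
have [y [r [Hvy ys rs eyr]]] : exists y r, [/\ connect ens v y, y \notin s, r \in s & e y r].
  by move: (Hconn v s0) => /connectP [l Hl Hlast]; apply: fh Hl vs _; rewrite -Hlast.
case: (rot_to rs) => i s' Hrot.
have Hc' : cycle e (r :: s') by rewrite -Hrot rot_cycle.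
have Hu' : uniq (r :: s') by rewrite -Hrot rot_uniq.
have Hsz' : (3 <= size (r :: s'))%N by rewrite -Hrot size_rot.
have memr : forall x, x \in r :: s' -> x \in s by move=> x; rewrite -Hrot mem_rot.
case: s' Hrot Hc' Hu' Hsz' memr => [|p arc] // Hrot Hc' Hu' Hsz' memr.
case: arc Hrot Hc' Hu' Hsz' memr => [|z arc] // Hrot Hc' Hu' Hsz' memr.
move: Hc'; rewrite /cycle /= rcons_path => /and3P[erp epz /andP[Hpath eqr]].
set q := last z arc in eqr.
move: Hu' => /= /andP[]; rewrite !inE !negb_or => /and3P[rp rz ra] /andP[].
move=> /andP[pz pa] _.
have pr : p != r by rewrite eq_sym.
have ps : p \in s by apply: memr; rewrite !inE eqxx orbT.
have qin : q \in z :: arc by apply: mem_last.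
have pq : p != q.
  apply/eqP => pq; move: qin; rewrite -pq inE (negbTE pz) /=.
  by rewrite (negbTE pa).
have erq : e r q by rewrite esy.
have Hpq : connect (avoid e r) p q.
  apply/connectP; exists (z :: arc) => //.
  apply: path_avoid => //; first by rewrite /= epz Hpath.
  by rewrite inE negb_or rz ra.
have vr : v != r by apply: contraNneq vs => ->.
have vD : forall u, (u == v) || e v u -> ~~ connect (avoid e r) p u.
  move=> u Hu0; apply/negP => Hpu.
  have ur : u != r := avoid_ne Hpu pr.
  have Huv : connect (avoid e r) u v.
    case/orP: Hu0 => [/eqP->|evu]; first exact: connect0.
    by apply: connect1; rewrite /= esy evu ur vr.
  have Hvy' : connect (avoid e r) v y.
    apply: (connect_sub _ Hvy) => x z' /= /andP[/andP[exz xs] zs].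
    apply: connect1; rewrite /= exz.
    have xr : x != r by apply: contraNneq xs => ->.
    have z'r : z' != r by apply: contraNneq zs => ->.
    by rewrite xr z'r.
  have Hpy := connect_trans (connect_trans Hpu Huv) Hvy'.
  have Hyr : connect (rmedge e y r) y r.
    have py : p != y by apply: contraNneq ys => <-.
    apply: (@connect_trans _ _ p).
      rewrite (avoid_csym esy) in Hpy.
      apply: (connect_sub _ Hpy) => x x' /= /andP[/andP[exx xr] x'r].
      by apply: connect1; rewrite /= exx (negbTE xr) (negbTE x'r) !andbF.
    by apply: connect1; rewrite /= esy erp (negbTE py) (negbTE pr).
  have := ce_mem (bridge esy eirr Huni eyr Hyr).
  by rewrite (negbTE ys).
have key : forall u u', e v u -> e v u' -> u != u' -> conn u r -> ~~ conn u' r.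
  move=> u u' evu evu' uu' Hur; apply/negP => Hu'r.
  have := nonconn evu evu' uu'; rewrite (connect_trans Hur) //.
  by rewrite (avoid_csym esy).
set N := [set u | e v u] in H3.
have [a aN] : exists a, a \in N by apply/card_gt0P; move: H3; clear; lia.
have [b bN] : exists b, b \in N :\ a.
  by apply/card_gt0P; move: H3; rewrite (cardsD1 a N) aN /=; clear; lia.
have [c cN] : exists c, c \in N :\ a :\ b.
  apply/card_gt0P; move: H3; rewrite (cardsD1 a N) aN (cardsD1 b (N :\ a)) bN /=.
  by clear; lia.
move: aN bN cN; rewrite !inE => eva /andP[ba evb] /and3P[cb ca evc].
have ab : a != b by rewrite eq_sym.
have ac : a != c by rewrite eq_sym.
have bc : b != c by rewrite eq_sym.
have Hfin := case2_final rs ps erp erq pq pr Hpq vD.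
case: (boolP (conn a r)) => Har.
  by apply: Hfin evb evc bc (key _ _ eva evb ab Har) (key _ _ eva evc ac Har).
case: (boolP (conn b r)) => Hbr.
  by apply: Hfin eva evc ac Har (key _ _ evb evc bc Hbr).
by apply: Hfin eva evb ab Har Hbr.
Qed.

End Case2.


Theorem corollary2p9 (R : realType) (n : nat) (e : rel 'I_n) :
  simple_graph e -> unicyclic e ->
  ((exists v, 4 <= degree e v) \/
   (exists v, degree e v = 3 /\ forall s, is_cycle e s -> v \notin s)) ->
  ~ in_GSSP R e.
Proof.
move=> [esy eirr] [Hconn [s [Hs Huni]]] [[v Hv]|[v [Hv Hnot]]].
  exact: (@case1 R n e esy eirr s Hs Huni v Hv).
apply: (@case2 R n e esy eirr s Hs Huni v (Hnot s Hs) Hconn).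
by rewrite -/(degree e v) Hv.
Qed.
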